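(* For a positive integer $k$, every graph $H$ with $|E(H)|\le\frac{1}{2}k(k+1)$ has an almost $k$-coloring.
   Context: A (proper) coloring $c$ of a graph $H$ is an almost $k$-coloring if either $c$ is a $k$-coloring of $H$ (uses at most $k$ colors), or $c$ is a $(k+1)$-coloring of $H$ in which at least one color class is a singleton set. *)

(* Defs.v *)
From mathcomp Require Import all_boot.
Set Implicit Arguments. Unset Strict Implicit. Unset Printing Implicit Defensive.

(* A finite simple graph: vertex type T : finType, adjacency e : rel T,
   assumed symmetric and irreflexive (stated as hypotheses in the theorem). *)

Definition edges (T : finType) (e : rel T) : {set {set T}} :=
  [set E : {set T} | [exists u, exists v, (u != v) && e u v && (E == [set u; v])]].

Definition proper (T : finType) (e : rel T) (c : T -> nat) : Prop :=
  forall u v, e u v -> c u != c v.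

Definition ncolors (T : finType) (c : T -> nat) : nat := size (undup [seq c x | x <- enum T]).

Definition color_class (T : finType) (c : T -> nat) (i : nat) : {set T} :=
  [set x | c x == i].

Definition almost_coloring (T : finType) (e : rel T) (k : nat) (c : T -> nat) : Prop :=
  proper e c /\
  (ncolors c <= k \/ (ncolors c <= k.+1 /\ exists i, #|color_class c i| = 1)).

(* Main.v *)
Require Import Defs.
From mathcomp Require Import all_boot.
From mathcomp Require Import zify.

Section Helpers.
Variables (T : finType) (e : rel T).
Hypothesis esym : symmetric e.
Hypothesis eirr : irreflexive e.

Definition edgesIn (S : {set T}) : {set {set T}} :=
  [set E in edges e | E \subset S].

Definition indep (I : {set T}) : bool := [forall x in I, forall y in I, ~~ e x y].

Lemma edge_mem u v : u != v -> e u v -> [set u; v] \in edges e.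
Proof.
move=> uv euv; rewrite inE; apply/existsP; exists u; apply/existsP; exists v.
by rewrite uv euv eqxx.
Qed.

Lemma count_lemma (S I : {set T}) :
  I \subset S -> (forall x, x \in S :\: I -> exists2 y, y \in I & e x y) ->
  #|edgesIn (S :\: I)| + #|S :\: I| <= #|edgesIn S|.
Proof.
move=> IS hx.
pose f x := odflt x [pick y in I | e x y].
have fP x : x \in S :\: I -> f x \in I /\ e x (f x).
  move=> xS; rewrite /f; case: pickP => [y /andP[]|] //= H.
  by case: (hx x xS) => y yI exy; move: (H y); rewrite yI exy.
pose g x := [set x; f x].
have ginj : {in S :\: I &, injective g}.
  move=> x x' xS x'S gx.
  have : x \in g x' by rewrite -gx /g !inE eqxx.
  rewrite /g !inE => /orP[/eqP //|/eqP xf].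
  have [fI _] := fP x' x'S.
  by move: xS; rewrite inE xf fI.
have disj : [disjoint edgesIn (S :\: I) & g @: (S :\: I)].
  rewrite -setI_eq0; apply/eqP/setP => E; rewrite !inE.
  apply/negP => /andP[/andP[_ sub] /imsetP[x xS Ex]].
  have [fI _] := fP x xS.
  move/subsetP: sub => /(_ (f x)); rewrite Ex !inE eqxx orbT fI /=; by move=> /(_ isT).
have h1 := card_in_imset ginj.
have h2 := cardsU (edgesIn (S:\:I)) (g @: (S:\:I)).
have h3: #|edgesIn (S :\: I) :&: g @: (S :\: I)| = 0.
  by move: disj; rewrite -setI_eq0 => /eqP ->; rewrite cards0.
suff h4: #|edgesIn (S :\: I) :|: g @: (S :\: I)| <= #|edgesIn S|.
  by rewrite -h1 -[_ + _]subn0 -h3 -h2.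
apply: subset_leq_card; apply/subsetP => E; rewrite inE => /orP[|/imsetP[x xS ->]].
  rewrite !inE => /andP[-> sub] /=; apply: subset_trans sub _; exact: subsetDl.
have [fI exf] := fP x xS.
rewrite inE; apply/andP; split.
  apply: edge_mem exf; apply/negP => /eqP xf; move: xS; by rewrite inE xf fI.
apply/subsetP => z; rewrite !inE => /orP[/eqP ->|/eqP ->].
  by move: xS; rewrite inE => /andP[].
by move/subsetP: IS; apply.
Qed.

Lemma extend_col (S I : {set T}) k (c0 : T -> nat) :
  I \subset S -> indep I ->
  (forall u v, u \in S :\: I -> v \in S :\: I -> e u v -> c0 u != c0 v) ->
  (forall x, x \in S :\: I -> c0 x < k) ->
  exists c : T -> nat, (forall u v, u \in S -> v \in S -> e u v -> c u != c v)
     /\ (forall x, x \in S -> c x < k.+1).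
Proof.
move=> IS Iind c0P c0k.
exists (fun x => if x \in I then k else c0 x); split.
  move=> u v uS vS euv.
  case: ifP => uI; case: ifP => vI.
  - by move/forallP: Iind => /(_ u); rewrite uI => /forallP /(_ v); rewrite vI euv.
  - have := c0k v; rewrite inE vI vS => /(_ isT) h.
    by rewrite neq_ltn h orbT.
  - have := c0k u; rewrite inE uI uS => /(_ isT) h.
    by rewrite neq_ltn h.
  - by apply: c0P => //; rewrite inE ?uI ?vI ?uS ?vS.
move=> x xS; case: ifP => xI //.
by apply: ltnW; apply: c0k; rewrite inE xI xS.
Qed.

Lemma color_sub k : forall S : {set T}, 2 * #|edgesIn S| < k * k.+1 ->
  exists c : T -> nat, (forall u v, u \in S -> v \in S -> e u v -> c u != c v)
     /\ (forall x, x \in S -> c x < k).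
Proof.
elim: k => [|k IH] S hS; first by rewrite mul0n in hS.
pose P (I : {set T}) := (I \subset S) && indep I.
have P0 : P set0 by rewrite /P sub0set; apply/forallP => x; rewrite inE.
case: (@arg_maxnP _ set0 P (fun J => #|J|) P0) => I /andP[IS Iind] maxI.
have hx : forall x, x \in S :\: I -> exists2 y, y \in I & e x y.
  move=> x; rewrite inE => /andP[xI xS].
  case: (boolP [exists y in I, e x y]) => [/existsP[y /andP[]]| H]; first by exists y.
  exfalso.
  have : P (x |: I).
    rewrite /P subUset sub1set xS IS /=.
    apply/forallP => a; apply/implyP => aI; apply/forallP => b; apply/implyP => bI.
    move: aI bI; rewrite !inE => /orP[/eqP ->|aI] /orP[/eqP ->|bI].
    - by rewrite eirr.
    - by apply/negP => exb; move/negP: H; apply; apply/existsP; exists b; rewrite bI.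
    - by rewrite esym; apply/negP => exb; move/negP: H; apply; apply/existsP; exists a; rewrite aI.
    - by move/forallP: Iind => /(_ a); rewrite aI => /forallP /(_ b); rewrite bI.
  move/maxI; rewrite /= cardsU1 xI add1n ltnn; done.
have hc := count_lemma _ _ IS hx.
case: (leqP #|S :\: I| k) => hk.
  apply: (extend_col _ _ _ (fun x => index x (enum (S :\: I))) IS Iind).
    move=> u v uS vS euv; apply/negP => /eqP hi.
    have uE : u \in enum (S :\: I) by rewrite mem_enum.
    have vE : v \in enum (S :\: I) by rewrite mem_enum.
    have : u = v by rewrite -(nth_index u uE) hi (nth_index u vE).
    by move=> uv; move: euv; rewrite uv eirr.
  move=> x xS; apply: leq_trans hk; rewrite cardE index_mem mem_enum //.
have [c0 [c0P c0k]] : exists c : T -> nat,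
   (forall u v, u \in S :\: I -> v \in S :\: I -> e u v -> c u != c v)
     /\ (forall x, x \in S :\: I -> c x < k).
  apply: IH; nia.
exact: (extend_col _ _ _ _ IS Iind c0P c0k).
Qed.
End Helpers.

Lemma ncolors_le (T : finType) (c : T -> nat) n : (forall x, c x < n) -> ncolors c <= n.
Proof.
move=> h; rewrite /ncolors -[X in _ <= X](size_iota 0 n); apply: uniq_leq_size (undup_uniq _) _ => y.
by rewrite mem_undup => /mapP[x _ ->]; rewrite mem_iota add0n h.
Qed.

Theorem lemma3 (k : nat) (T : finType) (e : rel T) :
  0 < k -> symmetric e -> irreflexive e ->
  2 * #|edges e| <= k * k.+1 ->
  exists c : T -> nat, almost_coloring e k c.
Proof.
move=> k0 esym eirr hE.
case: (pickP (fun p : T * T => e p.1 p.2)) => [[u v] /= euv | none].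
  pose S := [set: T] :\ u.
  have uv : u != v by apply/negP => /eqP uv; move: euv; rewrite uv eirr.
  have hS : 2 * #|@edgesIn T e S| < k * k.+1.
    suff : #|@edgesIn T e S| < #|edges e| by lia.
    apply: proper_card; apply/properP; split.
      by apply/subsetP => E; rewrite inE => /andP[].
    exists [set u; v]; first exact: edge_mem.
    rewrite inE negb_and; apply/orP; right; apply/negP => /subsetP /(_ u).
    by rewrite !inE eqxx => /(_ isT).
  have [c [cP ck]] := color_sub _ _ esym eirr _ _ hS.
  have xS x : x != u -> x \in S by move=> xu; rewrite !inE xu.
  exists (fun x => if x == u then k else c x); split.
    move=> a b eab; case: ifP => au; case: ifP => bu.
    - by move: eab; rewrite (eqP au) (eqP bu) eirr.
    - by rewrite neq_ltn ck ?orbT // xS ?bu.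
    - by rewrite neq_ltn ck // xS ?au.
    - by apply: cP => //; apply: xS; rewrite ?au ?bu.
  right; split.
    apply: ncolors_le => x; case: ifP => xu //.
    by apply: ltnW; apply: ck; apply: xS; rewrite xu.
  exists k.
  suff -> : color_class (fun x => if x == u then k else c x) k = [set u] by rewrite cards1.
  apply/setP => x; rewrite !inE.
  case: ifP => xu; first by rewrite eqxx.
  by rewrite ltn_eqF // ck // xS ?xu.
exists (fun _ => 0); split.
  by move=> a b eab; move: (none (a, b)); rewrite /= eab.
by left; apply: leq_trans k0; apply: ncolors_le.
Qed.
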